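(* Let $G\le S_n$ be transitive and suppose $G$ contains two permutations $g_1,g_2$ whose i-types are disjoint. Then $G$ is primitive.
   Context: If $(m_1,\dots,m_l)$ is a partition of $m$, then $(km_1,\dots,km_l)$ is an ic-partition of type $(k,m)$. A clustering of a partition is a partition of its multiset of parts into sub-multisets (clusters). A partition of $km$ is an i-partition of type $(k,m)$ if it has a clustering $P_1,\dots,P_r$ and a partition $(k_1,\dots,k_r)$ of $k$ with each $P_i$ an ic-partition of type $(k_i,m)$. The i-type of a permutation $g\in S_n$ is the set of pairs $(k,m)$ with $k,m>1$, $km=n$, such that the cycle partition of $g$ (multiset of its cycle lengths) is an i-partition of type $(k,m)$. *)

(* Defs.v *)
From mathcomp Require Import all_boot all_fingroup all_solvable.
Set Implicit Arguments. Unset Strict Implicit. Unset Printing Implicit Defensive.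

(* Partitions are represented as sequences of positive naturals
   (order irrelevant; multisets compared with perm_eq). *)
Definition is_partition (m : nat) (s : seq nat) : Prop :=
  all (fun x => 0 < x) s /\ sumn s = m.

(* Cycle partition of g: multiset of the lengths of its cycles
   (orbits of <[g]>, fixed points included as 1-cycles). *)
Definition cycle_partition (n : nat) (g : {perm 'I_n}) : seq nat :=
  map (fun X : {set 'I_n} => #|X|) (enum (porbits g)).

Definition ic_partition (k m : nat) (P : seq nat) : Prop :=
  exists ms : seq nat, is_partition m ms /\ perm_eq P [seq k * x | x <- ms].

(* P is an i-partition of type (k,m): there is a clustering P_1,...,P_r of
   the multiset P and a partition (k_1,...,k_r) of k with each P_i an
   ic-partition of type (k_i, m).  The list C pairs each k_i with P_i. *)
Definition i_partition (k m : nat) (P : seq nat) : Prop :=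
  exists C : seq (nat * seq nat),
    [/\ perm_eq P (flatten [seq c.2 | c <- C]),
        is_partition k [seq c.1 | c <- C] &
        forall c, c \in C -> ic_partition c.1 m c.2].

Definition in_i_type (n : nat) (g : {perm 'I_n}) (k m : nat) : Prop :=
  [/\ 1 < k, 1 < m, k * m = n & i_partition k m (cycle_partition g)].

Definition i_types_disjoint (n : nat) (g1 g2 : {perm 'I_n}) : Prop :=
  forall k m, ~ (in_i_type g1 k m /\ in_i_type g2 k m).

(* Main.v *)
Require Import Defs.
From mathcomp Require Import all_boot all_fingroup all_solvable.
Set Implicit Arguments. Unset Strict Implicit. Unset Printing Implicit Defensive.

Lemma perm_flatten_filter (T U : eqType) (s : seq T) (f : T -> U) (os : seq U) :
  uniq os -> (forall x, x \in s -> f x \in os) ->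
  perm_eq s (flatten [seq [seq x <- s | f x == o] | o <- os]).
Proof.
move=> Uos Hs; apply/seq.permP => a.
rewrite count_flatten -map_comp.
have E : forall o, count a [seq x <- s | f x == o] = \sum_(x <- s) (a x && (f x == o)).
  move=> o; rewrite count_filter -sum1_count big_mkcond /=.
  by apply: eq_bigr => x _; rewrite andbC.
rewrite (eq_map (g := fun o => \sum_(x <- s) (a x && (f x == o)))); last first.
  by move=> o /=; rewrite E.
rewrite sumnE big_map exchange_big /= -[count a s]sum1_count big_mkcond /=.
rewrite big_seq_cond [in RHS]big_seq_cond; apply: eq_bigr => x /andP[xs _].
case: (a x) => /=; last by rewrite big1.
rewrite (eq_bigr (fun i => if i == f x then 1 else 0)) => [|i _]; last first.
  by rewrite eq_sym; case: eqP.
by rewrite -big_mkcond sum1_count count_uniq_mem ?Hs.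
Qed.

Lemma porbit_dvd (T : finType) (s : {perm T}) x j :
  (s ^+ j)%g x = x -> #|porbit s x| %| j.
Proof.
move=> H; set d := #|porbit s x|.
have d0 : 0 < d by rewrite lt0n card_porbit_neq0.
have Hd : (s ^+ d)%g x = x by rewrite permX iter_porbit.
have Hq : forall q r, (s ^+ (d * q + r))%g x = (s ^+ r)%g x.
  move=> q r; rewrite expgD permM expgnA.
  congr ((s ^+ r)%g _); elim: q => [|q IH]; first by rewrite expg0 perm1.
  by rewrite expgSr permM IH Hd.
have Hr : (s ^+ (j %% d))%g x = x.
  by rewrite -{2}H {2}(divn_eq j d) mulnC Hq.
rewrite /dvdn; case E: (j %% d) Hr => [//|r] Hr.
have rd : r.+1 < d by rewrite -E ltn_mod.
have U := uniq_traject_porbit s x.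
have := nth_uniq x (i := 0) (j := r.+1) _ _ U.
rewrite size_traject -/d => /(_ d0 rd).
rewrite !nth_traject // /=.
by rewrite -iterS -permX Hr eqxx.
Qed.

Lemma porbit_eq_mem (T : finType) (s : {perm T}) x y :
  y \in porbit s x -> porbit s y = porbit s x.
Proof. by move=> H; apply/eqP; rewrite eq_porbit_mem. Qed.

Lemma porbit_trivIset (T : finType) (s : {perm T}) (A : {pred T}) :
  trivIset [set porbit s x | x in A].
Proof.
apply/trivIsetP => _ _ /imsetP[x _ ->] /imsetP[y _ ->] neq.
rewrite -setI_eq0; apply: contraNT neq => /set0Pn[z /setIP[zx zy]].
by rewrite -(porbit_eq_mem zx) -(porbit_eq_mem zy).
Qed.

Lemma porbit_set0 (T : finType) (s : {perm T}) (A : {pred T}) :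
  set0 \notin [set porbit s x | x in A].
Proof.
apply/imsetP => [[x _ E]]; have := porbit_id s x; by rewrite -E inE.
Qed.

Lemma porbit_partition (T : finType) (s : {perm T}) (A : {set T}) :
  (forall x i, x \in A -> (s ^+ i)%g x \in A) ->
  partition [set porbit s x | x in A] A.
Proof.
move=> HA; rewrite /partition porbit_trivIset porbit_set0 andbT.
rewrite andbT.
apply/eqP/setP => y; apply/bigcupP/idP => [[_ /imsetP[x xA ->]] | yA].
  by case/porbitP => i ->; apply: HA.
by exists (porbit s y); [apply: imset_f | apply: porbit_id].
Qed.

Lemma sumn_mul (T : Type) (k : nat) (f : T -> nat) (l : seq T) :
  sumn [seq k * f x | x <- l] = k * sumn [seq f x | x <- l].
Proof. by elim: l => [|x l IH] /=; rewrite ?muln0 // IH mulnDr. Qed.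

Lemma key (n : nat) (Q : {set {set 'I_n}}) (m : nat) (g : {perm 'I_n}) :
  partition Q [set: 'I_n] -> (forall X, X \in Q -> #|X| = m) ->
  (forall X, X \in Q -> [set g x | x in X] \in Q) ->
  i_partition #|Q| m (cycle_partition g).
Proof.
move=> HQ Hm Hg.
have /and3P[/eqP covQ trQ nzQ] := HQ.
pose bg : {perm {set 'I_n}} := perm (imset_inj (@perm_inj _ g)).
have bgE X : bg X = [set g x | x in X] by rewrite permE.
pose b := pblock Q.
have F1 x : b x \in Q by rewrite pblock_mem // covQ inE.
have F2 x : x \in b x by rewrite mem_pblock covQ inE.
have F3 x : b (g x) = bg (b x).
  by rewrite bgE; apply: def_pblock => //; [apply: Hg | apply: imset_f].
have F4 i x : b ((g ^+ i)%g x) = (bg ^+ i)%g (b x).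
  elim: i => [|i IH]; first by rewrite !expg0 !perm1.
  by rewrite !expgSr !permM F3 IH.
have F5 X i : X \in Q -> (bg ^+ i)%g X \in Q.
  move=> XQ; elim: i => [|i IH]; first by rewrite expg0 perm1.
  by rewrite expgSr permM bgE; apply: Hg.
pose Ps := [set porbit bg X | X in Q].
have PsP : partition Ps Q by apply: porbit_partition => X i; apply: F5.
pose s := enum (porbits g).
pose os := enum Ps.
pose fc (c : {set 'I_n}) := if [pick x in c] is Some x then porbit bg (b x) else set0.
have FC y : fc (porbit g y) = porbit bg (b y).
  rewrite /fc; case: pickP => [x | /(_ y)]; last by rewrite porbit_id.
  by case/porbitP => i ->; rewrite F4 porbit_perm.
exists (map (fun Ob : {set {set 'I_n}} => (#|Ob|, map (fun c : {set 'I_n} => #|c|) [seq c <- s | fc c == Ob])) os); split.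
- rewrite -map_comp /= /cycle_partition.
  rewrite (eq_map (g := fun Ob => map (fun c : {set 'I_n} => #|c|) [seq c <- s | fc c == Ob])) //.
  rewrite (_ : flatten _ = map (fun c : {set 'I_n} => #|c|)
     (flatten [seq [seq c <- s | fc c == Ob] | Ob <- os])); last first.
    by rewrite map_flatten -map_comp.
  apply: perm_map; apply: perm_flatten_filter.
    exact: enum_uniq.
  move=> c; rewrite mem_enum => /imsetP[y _ ->]; rewrite FC mem_enum.
  exact: imset_f.
- rewrite -map_comp /=; split.
    apply/allP => _ /mapP[Ob OPs ->] /=; move: OPs.
    rewrite mem_enum => /imsetP[X _ ->].
    by rewrite lt0n card_porbit_neq0.
  by rewrite (card_partition PsP) sumnE big_map big_enum.
move=> _ /mapP[Ob OPs ->] /=; move: OPs; rewrite mem_enum => OPs.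
have [X0 X0Q EO] := imsetP OPs.
have OQ X : X \in Ob -> X \in Q by rewrite EO => /porbitP[i ->]; apply: F5.
have Opos : 0 < #|Ob| by rewrite EO lt0n card_porbit_neq0.
pose L := [seq c <- s | fc c == Ob].
have D c : c \in L -> #|Ob| %| #|c|.
  rewrite mem_filter mem_enum => /andP[/eqP Hc /imsetP[y _ Ec]].
  rewrite -Hc Ec FC; apply: porbit_dvd.
  by rewrite -F4 permX iter_porbit.
have SL : sumn (map (fun c : {set 'I_n} => #|c|) L) = #|Ob| * m.
  have ObP : partition Ob (cover Ob).
    rewrite /partition eqxx (trivIsetS _ trQ) /=; last by apply/subsetP => X; exact: OQ.
    by apply: contra nzQ; exact: OQ.
  pose Cs := [set c in porbits g | fc c == Ob].
  have CsP : partition Cs (cover Ob).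
    rewrite /partition; apply/and3P; split.
    - apply/eqP/setP => y; apply/bigcupP/bigcupP.
        case=> c; rewrite inE => /andP[/imsetP[x _ ->] /eqP Hf] yc.
        exists (b y); last exact: F2.
        move: yc => /porbitP[i ->]; rewrite -Hf FC F4; exact: mem_porbit.
      case=> X XOb yX; exists (porbit g y); last exact: porbit_id.
      rewrite inE imset_f //= FC.
      have -> : b y = X by apply: def_pblock trQ (OQ X XOb) yX.
      by rewrite EO (porbit_eq_mem (x := X0) (y := X)) // -EO.
    - apply: (trivIsetS _ (porbit_trivIset g 'I_n)).
      by apply/subsetP => c; rewrite inE => /andP[].
    - by rewrite inE (negbTE (porbit_set0 _ _)).
  rewrite sumnE big_map big_filter big_enum_cond.
  rewrite (eq_bigl (fun c => c \in Cs)); last by move=> c; rewrite inE.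
  rewrite -(card_partition CsP).
  apply: card_uniform_partition ObP => X XOb; exact: Hm (OQ X XOb).
exists (map (fun c : {set 'I_n} => #|c| %/ #|Ob|) L); split; last first.
  rewrite -map_comp (_ : map _ L = map (fun c : {set 'I_n} => #|c|) L) //.
  by apply/eq_in_map => c cL /=; rewrite mulnC divnK // D.
split.
  apply/allP => _ /mapP[c cL ->]; rewrite divn_gt0 // dvdn_leq ?D //.
  move: cL; rewrite mem_filter mem_enum => /andP[_ /imsetP[y _ ->]].
  by rewrite lt0n card_porbit_neq0.
apply/eqP; rewrite -(eqn_pmul2l Opos) -sumn_mul -SL.
apply/eqP; congr sumn; apply/eq_in_map => c cL.
by rewrite mulnC divnK // D.
Qed.

Unset Implicit Arguments.
Theorem mainTheorem18 (n : nat) (G : {group {perm 'I_n}})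
  (g1 g2 : {perm 'I_n}) :
  [transitive G, on [set: 'I_n] | 'P] ->
  g1 \in G -> g2 \in G ->
  i_types_disjoint g1 g2 ->
  [primitive G, on [set: 'I_n] | 'P].
Proof.
move=> trG g1G g2G disj; rewrite /primitive trG /=.
apply/existsP => [[Q /and3P[HQ actQ /andP[k1 kn]]]].
have /and3P[/eqP covQ trQ nzQ] := HQ.
move: kn; rewrite cardsT card_ord => kn.
have n0 : 0 < n := leq_ltn_trans (leq0n _) kn.
pose x0 : 'I_n := Ordinal n0.
pose m := #|pblock Q x0|.
have Hact a X : a \in G -> X \in Q -> [set a x | x in X] \in Q.
  by move=> aG XQ; have := (actsP actQ) a aG X; rewrite XQ.
have Hm X : X \in Q -> #|X| = m.
  move=> XQ; have /set0Pn[y yX] : X != set0 by apply: contraNneq nzQ => <-.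
  have [a aG ya] := atransP2 trG (in_setT x0) (in_setT y).
  have x0Q : pblock Q x0 \in Q by rewrite pblock_mem // covQ inE.
  have E : [set a x | x in pblock Q x0] = X.
    rewrite -(def_pblock trQ XQ yX); apply/esym/def_pblock => //.
      exact: Hact.
    by rewrite ya /=; apply: imset_f; rewrite mem_pblock covQ inE.
  by rewrite -E card_imset //; apply: perm_inj.
have Hn : n = #|Q| * m.
  by rewrite -(card_uniform_partition Hm HQ) cardsT card_ord.
have m1 : 1 < m.
  have m0 : 0 < m by rewrite card_gt0; apply/set0Pn; exists x0; rewrite mem_pblock covQ inE.
  rewrite ltn_neqAle m0 andbT; apply/eqP => m1E.
  have : #|Q| < #|Q| * m by rewrite -Hn.
  by rewrite -m1E muln1 ltnn.
apply: (disj #|Q| m); split; split => //; try by rewrite Hn.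
  by apply: key => // X XQ; apply: Hact.
by apply: key => // X XQ; apply: Hact.
Qed.
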